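(* If a graph $G$ is $M$-fat $n$-bottlenecked for some $M,n\in\mathbb N$, then the natural map $f:G\to G_{M,M}$ (for any root $x_0$) is a quasi-isometry.
   Context: All graphs are connected (and unbounded); multi-edges are allowed; $d$ is the graph metric on vertices. Sets $X,Y$ are $M$-disjoint if $d(x,y)>M$ for all $x\in X,y\in Y$; $X$ is $M$-connected if any two of its points are joined by a finite sequence in $X$ with consecutive distances $\le M$; $N_M(S)=\{y:d(s,y)<M\text{ for some }s\in S\}$. $G$ is $M$-fat $n$-bottlenecked if for any two connected $M$-disjoint subgraphs $X,Y\subset G$ there is $S\subset V(G)\setminus(V(X)\cup V(Y))$ with $|S|=n$ such that every path from a vertex of $X$ to a vertex of $Y$ meets $N_M(S)$. Skeleton $G_{\lambda,k}$ (root $x_0\in V(G)$, scale $\lambda\ge1$, connectivity $k\ge1$): layers $A_{N,\lambda}=\{x: N\lambda<d(x,x_0)\le(N+1)\lambda\}$, $N\in\mathbb Z$; blocks are the maximal $k$-connected subsets of layers; $G_{\lambda,k}$ has a vertex per block and an edge between two blocks iff an edge of $G$ joins a vertex of one to a vertex of the other. The natural map $f$ sends each vertex of $G$ to (the vertex corresponding to) its block. A map $f$ is a quasi-isometry if there are $a\ge1,b\ge0$ with $\frac1a d(x,y)-b\le d(f(x),f(y))\le a d(x,y)+b$ (and a quasi-isometric embedding in the other direction exists). *)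

(* Defs.v *)
From Stdlib Require Import Reals ZArith Arith List ClassicalEpsilon.
Import ListNotations.
Set Implicit Arguments.

Section Defs.
Variable T : Type.
Variable adj : T -> T -> Prop.

Inductive walk : T -> T -> nat -> Prop :=
| walk0 : forall x, walk x x 0
| walkS : forall x y z n, adj x y -> walk y z n -> walk x z (S n).

(* graph metric: the least length of a walk (meaningful for connected graphs) *)
Definition dist (x y : T) : nat :=
  epsilon (inhabits 0%nat)
    (fun n => walk x y n /\ forall m, walk x y m -> (n <= m)%nat).

Inductive chain : list T -> Prop :=
| chain1 : forall x, chain [x]
| chainS : forall x y l, adj x y -> chain (y :: l) -> chain (x :: y :: l).
End Defs.

Section Graph.
Variable V : Type.
Variable adj : V -> V -> Prop.
Local Notation d := (dist adj).

Definition symmetric_graph : Prop := forall x y, adj x y -> adj y x.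
Definition connected_graph : Prop := forall x y, exists n, walk adj x y n.
Definition unbounded_graph : Prop := forall m : nat, exists x y, (d x y > m)%nat.

Definition connected_set (X : V -> Prop) : Prop :=
  (exists x, X x) /\
  forall x y, X x -> X y ->
    exists n, walk (fun u v => adj u v /\ X u /\ X v) x y n.

Definition M_disjoint (M : nat) (X Y : V -> Prop) : Prop :=
  forall x y, X x -> Y y -> (d x y > M)%nat.

Definition nbhd (M : nat) (S : list V) (y : V) : Prop :=
  exists s, In s S /\ (d s y < M)%nat.

Definition path_from_to (X Y : V -> Prop) (p : list V) : Prop :=
  chain adj p /\ NoDup p /\
  exists x p', p = x :: p' /\ X x /\ Y (last p' x).

Definition fat_bottlenecked (M n : nat) : Prop :=
  forall X Y : V -> Prop,
    connected_set X -> connected_set Y -> M_disjoint M X Y ->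
    exists S : list V,
      length S = n /\ NoDup S /\
      (forall s, In s S -> ~ X s /\ ~ Y s) /\
      (forall p, path_from_to X Y p -> exists v, In v p /\ nbhd M S v).

Definition layer (x0 : V) (lam : nat) (N : Z) (x : V) : Prop :=
  (N * Z.of_nat lam < Z.of_nat (d x x0) <= (N + 1) * Z.of_nat lam)%Z.

Definition k_connected (k : nat) (B : V -> Prop) : Prop :=
  (exists x, B x) /\
  forall x y, B x -> B y ->
    exists l, chain (fun u v => (d u v <= k)%nat) (x :: l) /\
              (forall z, In z l -> B z) /\ last l x = y.

Definition is_block (x0 : V) (lam k : nat) (B : V -> Prop) : Prop :=
  exists N : Z,
    (forall x, B x -> layer x0 lam N x) /\ k_connected k B /\
    forall B' : V -> Prop,
      (forall x, B x -> B' x) -> (forall x, B' x -> layer x0 lam N x) ->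
      k_connected k B' -> forall x, B' x -> B x.

Definition skel_adj (x0 : V) (lam k : nat) (B B' : V -> Prop) : Prop :=
  is_block x0 lam k B /\ is_block x0 lam k B' /\
  exists u v, B u /\ B' v /\ adj u v.

Definition skel_dist (x0 : V) (lam k : nat) : (V -> Prop) -> (V -> Prop) -> nat :=
  dist (skel_adj x0 lam k).

Definition skel_quasi_isometry (x0 : V) (lam k : nat) (f : V -> (V -> Prop)) : Prop :=
  (exists a b : R, (1 <= a)%R /\ (0 <= b)%R /\
     forall x y,
       (/ a * INR (d x y) - b <= INR (skel_dist x0 lam k (f x) (f y)))%R /\
       (INR (skel_dist x0 lam k (f x) (f y)) <= a * INR (d x y) + b)%R) /\
  (exists (g : (V -> Prop) -> V) (a b : R), (1 <= a)%R /\ (0 <= b)%R /\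
     forall B B', is_block x0 lam k B -> is_block x0 lam k B' ->
       (/ a * INR (skel_dist x0 lam k B B') - b <= INR (d (g B) (g B')))%R /\
       (INR (d (g B) (g B')) <= a * INR (skel_dist x0 lam k B B') + b)%R).
End Graph.

(* Main.v *)
Require Import Defs.
From Stdlib Require Import Reals ZArith Arith List Lia Lra ClassicalEpsilon Classical.
Import ListNotations.
Set Implicit Arguments.

Section Gen.
Variable T : Type.
Variable R : T -> T -> Prop.

Lemma walk_app x y z a b : walk R x y a -> walk R y z b -> walk R x z (a + b).
Proof. induction 1; simpl; auto. intros; eapply walkS; eauto. Qed.

Lemma walk_snoc x y z n : walk R x y n -> R y z -> walk R x z (S n).
Proof. intros H1 H2. replace (S n) with (n + 1) by lia. eapply walk_app; eauto.
  eapply walkS; eauto. constructor. Qed.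

Lemma walk_rev (HR : forall a b, R a b -> R b a) x y n : walk R x y n -> walk R y x n.
Proof. induction 1. constructor. eapply walk_snoc; eauto. Qed.

Lemma walk_split a b : forall x z, walk R x z (a + b) -> exists w, walk R x w a /\ walk R w z b.
Proof. induction a; simpl; intros x z H. exists x; split; auto; constructor.
  inversion H as [|? y ? ? Hxy Hyz]; subst. destruct (IHa _ _ Hyz) as [w [H5 H6]]. exists w; split; auto.
  eapply walkS; eauto. Qed.

Lemma dist_spec x y : (exists n, walk R x y n) ->
  walk R x y (Defs.dist R x y) /\ forall m, walk R x y m -> Defs.dist R x y <= m.
Proof.
  intros [n Hn]. unfold Defs.dist. apply epsilon_spec.
  revert Hn. induction n as [n IH] using (well_founded_induction lt_wf). intros Hn.
  destruct (classic (exists k, k < n /\ walk R x y k)) as [[k [Hk1 Hk2]]|Hno].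
  - eauto.
  - exists n; split; auto. intros m Hm. destruct (le_lt_dec n m); auto.
    exfalso; apply Hno; eauto.
Qed.

Lemma walk_mono (R' : T -> T -> Prop) x y n : (forall a b, R a b -> R' a b) -> walk R x y n -> walk R' x y n.
Proof. intros HR; induction 1. constructor. eapply walkS; eauto. Qed.

Lemma last_cons_eq (l : list T) a d : last (a :: l) d = last l a.
Proof. revert a d. induction l; intros; auto.
  change (last (a0 :: a :: l) d) with (last (a :: l) d). rewrite !IHl. auto. Qed.

Lemma last_app_ne (l1 l2 : list T) d : l2 <> [] -> last (l1 ++ l2) d = last l2 d.
Proof. induction l1; simpl; intros; auto. rewrite IHl1; auto.
  destruct l1; simpl. destruct l2; [congruence|auto]. auto. Qed.

Lemma chain_app_r (l1 l2 : list T) : l2 <> [] -> chain R (l1 ++ l2) -> chain R l2.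
Proof. induction l1; simpl; intros; auto. apply IHl1; auto.
  inversion H0; subst. destruct l1; simpl in *; subst; congruence. auto. Qed.

Lemma path_of_walk (P : T -> Prop) x y n :
  walk (fun a b => R a b /\ P a /\ P b) x y n -> P x ->
  exists l, chain R (x :: l) /\ NoDup (x :: l) /\ last l x = y /\ forall z, In z (x :: l) -> P z.
Proof.
  induction 1; intros Px.
  - exists []; repeat split; auto. constructor. constructor; auto. constructor.
    intros z [<-|[]]; auto.
  - destruct H as [Hxy [_ Py]]. destruct (IHwalk Py) as [l [Hc [Hn [Hl Hp]]]].
    destruct (classic (In x (y :: l))) as [Hin|Hnin].
    + destruct (in_split _ _ Hin) as [l1 [l2 Hs]]. exists l2. rewrite Hs in Hc, Hn, Hp.
      repeat split.
      * eapply chain_app_r; eauto; congruence.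
      * eapply NoDup_app_remove_l; eauto.
      * rewrite <- Hl. rewrite <- (last_cons_eq l y x). rewrite Hs.
        rewrite <- (last_cons_eq l2 x x). now rewrite last_app_ne by congruence.
      * intros w [<-|Hz]; auto. apply Hp. apply in_or_app; right; right; auto.
    + exists (y :: l). repeat split.
      * constructor; auto.
      * constructor; auto.
      * rewrite last_cons_eq; auto.
      * intros w [<-|Hz]; auto.
Qed.

Lemma chain_ivt (g : T -> nat) (K t : nat) (x : T) (l : list T) :
  chain (fun a b => g b <= g a + K) (x :: l) -> g x <= t -> t <= g (last l x) ->
  exists z, In z (x :: l) /\ t <= g z <= t + K.
Proof.
  revert x; induction l as [|y l IH]; intros x Hc H1 H2; simpl in *.
  - exists x; split; auto; lia.
  - inversion Hc; subst. destruct (le_lt_dec (g y) t).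
    + destruct (IH y) as [z [Hz1 Hz2]]; auto. rewrite <- last_cons_eq with (d:=x); auto.
      exists z; split; auto.
    + exists y; split; auto. lia.
Qed.

Lemma chain_mono (R' : T -> T -> Prop) l : (forall a b, R a b -> R' a b) -> chain R l -> chain R' l.
Proof. intros HR; induction 1; constructor; auto. Qed.

Lemma chain_all (P : T -> Prop) x l : chain R (x :: l) -> P x -> (forall a b, R a b -> P a -> P b) ->
  forall z, In z (x :: l) -> P z.
Proof. revert x; induction l; intros x Hc Px Hs z Hz; simpl in Hz.
  destruct Hz as [<-|[]]; auto.
  inversion Hc; subst. destruct Hz as [<-|Hz]; auto. apply (IHl a); eauto. Qed.
End Gen.

Section G.
Variable V : Type.
Variable adj : V -> V -> Prop.
Hypothesis Hsym : symmetric_graph adj.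
Hypothesis Hconn : connected_graph adj.
Local Notation d := (Defs.dist adj).

Lemma d_walk x y : walk adj x y (d x y).
Proof. apply dist_spec; auto. Qed.
Lemma d_min {x y m} : walk adj x y m -> d x y <= m.
Proof. apply dist_spec; eauto. Qed.
Lemma d_refl x : d x x = 0.
Proof. pose proof (d_min (walk0 adj x)). lia. Qed.
Lemma d_sym x y : d x y = d y x.
Proof. pose proof (d_min (walk_rev Hsym (d_walk x y))).
  pose proof (d_min (walk_rev Hsym (d_walk y x))). lia. Qed.
Lemma d_tri x y z : d x z <= d x y + d y z.
Proof. apply d_min. eapply walk_app; apply d_walk. Qed.
Lemma d_adj {x y} : adj x y -> d x y <= 1.
Proof. intros H. apply d_min. eapply walkS; eauto. constructor. Qed.
Lemma d_zero x y : d x y = 0 -> x = y.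
Proof. intros H. pose proof (d_walk x y) as W. rewrite H in W. inversion W; auto. Qed.

Lemma walk_near_start x z L : walk adj x z L ->
  walk (fun a b => adj a b /\ d x a <= L /\ d x b <= L) x z L.
Proof.
  induction 1. constructor.
  eapply walkS. split; [exact H|]. rewrite d_refl. pose proof (d_adj H). lia.
  eapply walk_mono; [|exact IHwalk]. simpl. intros a b [H1 [H2 H3]].
  pose proof (d_adj H). pose proof (d_tri x y a). pose proof (d_tri x y b). repeat split; auto; lia.
Qed.

Lemma walk_near_end x z L : walk adj x z L ->
  walk (fun a b => adj a b /\ d a z <= L /\ d b z <= L) x z L.
Proof.
  induction 1. constructor.
  assert (d x z <= S n) by (apply d_min; eapply walkS; eauto).
  pose proof (d_min H0).
  eapply walkS. split; [exact H|]. lia.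
  eapply walk_mono; [|exact IHwalk]. simpl. intros a b [G1 [G2 G3]]. repeat split; auto; lia.
Qed.

Definition gcomp (Q : V -> Prop) (u w : V) : Prop :=
  Q w /\ exists m, walk (fun a b => adj a b /\ Q a /\ Q b) u w m.

Lemma comp_walk Q u a b k : walk (fun a b => adj a b /\ Q a /\ Q b) a b k -> gcomp Q u a ->
  walk (fun a b => adj a b /\ gcomp Q u a /\ gcomp Q u b) a b k.
Proof.
  induction 1. constructor. intros Ha.
  assert (Hy : gcomp Q u y).
  { destruct H as [H1 [H2 H3]]. split; auto. destruct Ha as [_ [m Hm]]. exists (S m).
    eapply walk_snoc; eauto. }
  eapply walkS; eauto. split; auto. apply H.
Qed.

Lemma comp_connected Q u : Q u -> connected_set adj (gcomp Q u).
Proof.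
  intros Qu. split. exists u. split; auto. exists 0; constructor.
  intros x y Hx Hy. destruct Hx as [Qx [mx Wx]]. destruct Hy as [Qy [my Wy]].
  exists (mx + my). apply comp_walk.
  eapply walk_app; [|exact Wy]. apply walk_rev; auto.
  intros a b [H1 [H2 H3]]; repeat split; auto.
  split; auto. exists mx; auto.
Qed.
End G.

Lemma pigeon (A : Type) (SS : list A) n (F : nat -> A) : length SS = n ->
  (forall i, i <= n -> In (F i) SS) -> exists i j, i < j <= n /\ F i = F j.
Proof.
  intros HL HF. apply NNPP; intros H.
  assert (HN : NoDup (map F (seq 0 (S n)))).
  { apply NoDup_map_NoDup_ForallPairs; [|apply seq_NoDup].
    intros x y Hx Hy Hxy. apply in_seq in Hx, Hy.
    destruct (Nat.lt_trichotomy x y) as [Hl|[Hl|Hl]]; auto; exfalso; apply H.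
    exists x, y; split; auto; lia. exists y, x; split; auto; lia. }
  apply NoDup_incl_length with (l' := SS) in HN.
  rewrite length_map, length_seq in HN. lia.
  intros a Ha. apply in_map_iff in Ha. destruct Ha as [i [<- Hi]]. apply in_seq in Hi. apply HF; lia.
Qed.

Lemma chain_all_in (T : Type) (R : T -> T -> Prop) (P : T -> Prop) x l : chain R (x :: l) -> P x ->
  (forall a b, In a (x :: l) -> R a b -> P a -> P b) ->
  forall z, In z (x :: l) -> P z.
Proof. revert x; induction l; intros x Hc Px Hs z Hz; simpl in Hz.
  destruct Hz as [<-|[]]; auto.
  inversion Hc; subst. destruct Hz as [<-|Hz]; auto.
  apply (IHl a); auto. apply (Hs x); simpl; auto. intros. apply (Hs a0); simpl; auto. Qed.

Section B.
Variable V : Type.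
Variable adj : V -> V -> Prop.
Hypothesis Hsym : symmetric_graph adj.
Hypothesis Hconn : connected_graph adj.
Local Notation d := (Defs.dist adj).
Variables (M n : nat) (x0 : V).
Hypothesis HM : 1 <= M.
Hypothesis Hfat : fat_bottlenecked adj M n.

Lemma layer_close N a b : layer adj x0 M N a -> layer adj x0 M N b -> d a x0 < d b x0 + M.
Proof. unfold layer. rewrite Z.mul_add_distr_r, Z.mul_1_l. intros; lia. Qed.

Lemma block_diam (B : V -> Prop) N : (forall x, B x -> layer adj x0 M N x) ->
  k_connected adj M B -> forall u v, B u -> B v -> d u v <= n * (11 * M + 1) + 8 * M + 2.
Proof.
  intros HBl Hk u v Hu Hv.
  set (h := d u x0).
  assert (Hlev : forall z, B z -> d z x0 < h + M /\ h < d z x0 + M).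
  { intros z Hz. split; eapply layer_close; eauto. }
  destruct (le_lt_dec h (3 * M)) as [Hsmall|Hbig].
  { pose proof (d_tri Hconn u x0 v). rewrite (d_sym Hsym Hconn x0 v) in H.
    destruct (Hlev v Hv). lia. }
  destruct (le_lt_dec (d u v) (n * (11 * M + 1) + 8 * M + 2)) as [Hok|Hfar]; [exact Hok|]; exfalso.
  set (r := h - 3 * M - 1).
  set (Q := fun w => h < d w x0 + 2 * M).
  set (X := gcomp adj Q u).
  set (Qy := fun w => d w x0 <= r).
  set (Y := gcomp adj Qy x0).
  assert (Hcx : connected_set adj X).
  { apply comp_connected; auto. unfold Q. fold h. lia. }
  assert (Hcy : connected_set adj Y).
  { apply comp_connected; auto. unfold Qy. rewrite d_refl; auto. lia. }
  assert (Hdisj : M_disjoint adj M X Y).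
  { intros a b [Qa _] [Qb _]. unfold Q, Qy in *. pose proof (d_tri Hconn a b x0). lia. }
  destruct (Hfat Hcx Hcy Hdisj) as [SS [HSlen [_ [_ HS]]]].
  destruct Hk as [_ Hk]. destruct (Hk u v Hu Hv) as [l [Hc [Hl Hlast]]].
  assert (HinB : forall z, In z (u :: l) -> B z).
  { intros z [<-|Hz]; auto. }
  assert (HinX : forall z, In z (u :: l) -> X z).
  { apply chain_all_in with (R := fun a b => d a b <= M); auto.
    - split. unfold Q; fold h; lia. exists 0; constructor.
    - intros a b Ha Hab [Qa [m Wm]].
      assert (Hb : B a) by auto. destruct (Hlev a Hb) as [_ Ha2].
      pose proof (walk_near_start Hconn (d_walk Hconn a b)) as W.
      assert (Qb : Q b).
      { unfold Q. pose proof (d_tri Hconn a b x0). lia. }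
      split; auto. exists (m + d a b). eapply walk_app; eauto.
      eapply walk_mono; [|exact W]. simpl. intros a' b' [G1 [G2 G3]]. unfold Q.
      pose proof (d_tri Hconn a a' x0). pose proof (d_tri Hconn a b' x0).
      repeat split; auto; lia. }
  assert (Hclaim : forall i, i <= n -> exists ps : V * V,
             In (snd ps) SS /\ i * (11 * M + 1) <= d u (fst ps) <= i * (11 * M + 1) + M /\
             d (snd ps) (fst ps) < 5 * M).
  { intros i Hi.
    destruct (@chain_ivt V (d u) M (i * (11 * M + 1)) u l)
      as [p [Hp1 Hp2]].
    - eapply chain_mono; [|exact Hc]. simpl. intros a b Hab.
      pose proof (d_tri Hconn u a b). lia.
    - rewrite d_refl; auto. lia.
    - rewrite Hlast. assert (i * (11 * M + 1) <= n * (11 * M + 1)) by (apply Nat.mul_le_mono_r; auto).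
      lia.
    - destruct (Hlev p (HinB p Hp1)) as [Hp3 Hp4].
      set (L := d p x0). set (K := L - r).
      assert (WL : walk adj p x0 (K + r)).
      { replace (K + r) with L by (unfold K, L, r in *; lia). apply d_walk; auto. }
      destruct (walk_split _ _ WL) as [w [W1 W2]].
      assert (Yw : Y w).
      { assert (Hw : d w x0 <= r) by (apply (d_min Hconn W2)).
        split. exact Hw. exists (d w x0). apply walk_rev.
        { intros a b [G1 [G2 G3]]; repeat split; auto. }
        eapply walk_mono; [|exact (walk_near_end Hconn (d_walk Hconn w x0))].
        simpl. unfold Qy. intros a b [G1 [G2 G3]]; repeat split; auto; lia. }
      destruct (path_of_walk adj (fun a => d p a <= K) (walk_near_start Hconn W1))
        as [l' [Hc' [Hn' [Hl' Hp']]]].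
      { rewrite d_refl; auto. lia. }
      assert (Hpath : path_from_to adj X Y (p :: l')).
      { split; auto. split; auto. exists p, l'. split; auto. split; auto. rewrite Hl'; auto. }
      destruct (HS _ Hpath) as [v' [Hv'1 [s [Hs1 Hs2]]]].
      exists (p, s). simpl. split; auto. split. lia.
      pose proof (d_tri Hconn s v' p). rewrite (d_sym Hsym Hconn v' p) in H.
      pose proof (Hp' v' Hv'1). simpl in H0. unfold K, L, r in *. lia. }
  set (F := fun i => ClassicalEpsilon.epsilon (inhabits (u, u)) (fun ps : V * V => i <= n ->
             In (snd ps) SS /\ i * (11 * M + 1) <= d u (fst ps) <= i * (11 * M + 1) + M /\
             d (snd ps) (fst ps) < 5 * M)).
  assert (HF : forall i, i <= n ->
             In (snd (F i)) SS /\ i * (11 * M + 1) <= d u (fst (F i)) <= i * (11 * M + 1) + M /\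
             d (snd (F i)) (fst (F i)) < 5 * M).
  { intros i Hi.
    assert (E : exists ps : V * V, i <= n ->
             In (snd ps) SS /\ i * (11 * M + 1) <= d u (fst ps) <= i * (11 * M + 1) + M /\
             d (snd ps) (fst ps) < 5 * M).
    { destruct (Hclaim i Hi) as [ps Hps]. exists ps; auto. }
    pose proof (epsilon_spec (inhabits (u, u)) _ E) as E'. apply E'. exact Hi. }
  destruct (@pigeon V SS n (fun i => snd (F i)) HSlen) as [i [j [Hij Heq]]].
  { intros i Hi. apply HF; auto. }
  destruct (HF i ltac:(lia)) as [_ [Hi1 Hi2]].
  destruct (HF j ltac:(lia)) as [_ [Hj1 Hj2]].
  simpl in Heq. rewrite Heq in Hi2.
  pose proof (d_tri Hconn (fst (F i)) (snd (F j)) (fst (F j))).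
  rewrite (d_sym Hsym Hconn (fst (F i)) (snd (F j))) in H.
  pose proof (d_tri Hconn u (fst (F i)) (fst (F j))).
  assert (S i * (11 * M + 1) <= j * (11 * M + 1)) by (apply Nat.mul_le_mono_r; lia).
  simpl in H1. lia.
Qed.
End B.

Lemma real_fin1 (c D s : nat) : (s <= D + 2)%nat -> (D <= (c + 1) * s + c)%nat ->
  (/ INR (c + 1) * INR D - INR (c + 2) <= INR s)%R /\ (INR s <= INR (c + 1) * INR D + INR (c + 2))%R.
Proof.
  intros H1 H2. apply le_INR in H1, H2. rewrite plus_INR, mult_INR, plus_INR in H2.
  rewrite plus_INR in H1. rewrite !plus_INR. simpl in *.
  pose proof (pos_INR c). pose proof (pos_INR s). pose proof (pos_INR D).
  set (A := (INR c + 1)%R) in *. assert (HA : (A >= 1)%R) by (unfold A; lra).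
  set (t := (/ A * INR D)%R). assert (Ht : INR D = (A * t)%R) by (unfold t; field; lra).
  split; [|nra]. rewrite Ht in H2. nra.
Qed.

Lemma real_fin2 (c D s : nat) : (s <= D + 2)%nat -> (D <= (c + 1) * s + c)%nat ->
  (/ INR (c + 1) * INR s - INR (c + 2) <= INR D)%R /\ (INR D <= INR (c + 1) * INR s + INR (c + 2))%R.
Proof.
  intros H1 H2. apply le_INR in H1, H2. rewrite plus_INR, mult_INR, plus_INR in H2.
  rewrite plus_INR in H1. rewrite !plus_INR. simpl in *.
  pose proof (pos_INR c). pose proof (pos_INR s). pose proof (pos_INR D).
  set (A := (INR c + 1)%R) in *. assert (HA : (A >= 1)%R) by (unfold A; lra).
  set (t := (/ A * INR s)%R). assert (Ht : INR s = (A * t)%R) by (unfold t; field; lra).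
  split; [|nra]. rewrite Ht in H1. nra.
Qed.
Unset Implicit Arguments.

Theorem theorem1 (V : Type) (adj : V -> V -> Prop) (M n : nat) (x0 : V)
  (Hsym : symmetric_graph adj) (Hconn : connected_graph adj)
  (Hunb : unbounded_graph adj)
  (Hfat : fat_bottlenecked adj M n)
  (f : V -> (V -> Prop))
  (Hf : forall x, is_block adj x0 M M (f x) /\ f x x) :
  skel_quasi_isometry adj x0 M M f.
Proof.
  destruct (Hunb 0%nat) as [xa [ya Hxy]].
  destruct (le_lt_dec 1 M) as [HM|HM0].
  2:{ exfalso. assert (M = 0%nat) by lia. subst.
      destruct (Hf xa) as [[N [HN _]] Hx]. apply HN in Hx. unfold layer in Hx.
      simpl in Hx. rewrite !Z.mul_0_r in Hx. lia. }
  set (C := (n * (11 * M + 1) + 8 * M + 2)%nat).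
  assert (Hdiam : forall B, is_block adj x0 M M B -> forall a b, B a -> B b ->
            (Defs.dist adj a b <= C)%nat).
  { intros B [N [HN [Hk _]]]. eapply block_diam; eauto. }
  assert (Hnb : forall w, exists w', adj w w').
  { intros w.
    assert (Hz : exists z, (Defs.dist adj w z > 0)%nat).
    { destruct (Nat.eq_dec (Defs.dist adj w xa) 0) as [E|E].
      - apply d_zero in E; auto. subst. eauto.
      - exists xa; lia. }
    destruct Hz as [z Hz]. pose proof (d_walk Hconn w z) as W.
    destruct (Defs.dist adj w z) eqn:E; [lia|]. inversion W; subst. eauto. }
  set (SA := skel_adj adj x0 M M).
  assert (Hsw : forall k a b, walk adj a b (S k) -> forall B B', is_block adj x0 M M B -> B a ->
             is_block adj x0 M M B' -> B' b -> walk SA B B' (S k)).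
  { induction k; intros a b W B B' HB Ha HB' Hb.
    - inversion W; subst. inversion H3; subst. eapply walkS; [|constructor].
      split; auto. split; auto. exists a, b; auto.
    - inversion W; subst. eapply walkS; [|eapply (IHk y b H3 (f y) B'); eauto; apply Hf].
      split; auto. split; [apply Hf|]. exists a, y; repeat split; auto. apply Hf. }
  assert (Hup : forall B B' a b, is_block adj x0 M M B -> B a -> is_block adj x0 M M B' -> B' b ->
             walk SA B B' (S (S (Defs.dist adj a b)))).
  { intros B B' a b HB Ha HB' Hb. destruct (Hnb a) as [w Hw].
    apply (Hsw _ a b); auto.
    change (S (S (Defs.dist adj a b))) with (2 + Defs.dist adj a b)%nat.
    eapply walk_app; [|apply d_walk; auto].
    eapply walkS; eauto. eapply walkS; [apply Hsym; eauto|constructor]. }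
  assert (Hlow : forall B B' m, is_block adj x0 M M B -> walk SA B B' m ->
             forall a b, B a -> B' b -> (Defs.dist adj a b <= (C + 1) * m + C)%nat).
  { intros B B' m HB W. induction W; intros a b Ha Hb.
    - pose proof (Hdiam x HB a b Ha Hb); lia.
    - destruct H as [_ [Hy [u [v [Hu [Hv Huv]]]]]].
      specialize (IHW Hy v b Hv Hb).
      pose proof (Hdiam x HB a u Ha Hu). pose proof (d_adj Hconn Huv).
      pose proof (d_tri Hconn a u b). pose proof (d_tri Hconn u v b). nia. }
  assert (Hboth : forall B B' a b, is_block adj x0 M M B -> B a -> is_block adj x0 M M B' -> B' b ->
            (skel_dist adj x0 M M B B' <= Defs.dist adj a b + 2)%nat /\
            (Defs.dist adj a b <= (C + 1) * skel_dist adj x0 M M B B' + C)%nat).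
  { intros B B' a b HB Ha HB' Hb. pose proof (Hup B B' a b HB Ha HB' Hb) as W.
    destruct (dist_spec (ex_intro _ _ W)) as [W1 W2]. split.
    - specialize (W2 _ W). eapply Nat.le_trans; [exact W2|lia].
    - exact (Hlow B B' _ HB W1 a b Ha Hb). }
  split.
  - exists (INR (C + 1)), (INR (C + 2)). split; [rewrite plus_INR; simpl; pose proof (pos_INR C); lra|].
    split; [apply pos_INR|]. intros x y.
    destruct (Hf x) as [Bx Hx]. destruct (Hf y) as [By Hy].
    destruct (Hboth _ _ _ _ Bx Hx By Hy). apply real_fin1; auto.
  - exists (fun B => ClassicalEpsilon.epsilon (inhabits x0) (fun v => B v)).
    exists (INR (C + 1)), (INR (C + 2)). split; [rewrite plus_INR; simpl; pose proof (pos_INR C); lra|].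
    split; [apply pos_INR|]. intros B B' HB HB'.
    assert (Hg : forall B, is_block adj x0 M M B -> B (ClassicalEpsilon.epsilon (inhabits x0) (fun v => B v))).
    { intros B0 [N [_ [[Hex _] _]]]. apply (epsilon_spec (inhabits x0) (fun v => B0 v)). exact Hex. }
    destruct (Hboth _ _ _ _ HB (Hg B HB) HB' (Hg B' HB')). apply real_fin2; auto.
Qed.
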